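(* Let $x_1,\dots,x_n\in\mathbb{R}^D$ be distinct points, let $\mathbf{f}=(f(x_1),\dots,f(x_n))^\top\in\mathbb{R}^n$ be the values of a function $f$ at these points, and let $\lambda>0$. For each level $l\ge 0$ let $\mathbf{K}^{(l)}\in\mathbb{R}^{n\times n}$ be the Gaussian kernel matrix $[\mathbf{K}^{(l)}]_{ij}=\exp\!\big(-\|x_i-x_j\|^2/(2r_l^2)\big)$ with bandwidth $r_l>0$, let $0<\sigma_{l,n}\le\dots\le\sigma_{l,1}$ be its eigenvalues, and set $\mathbf{P}^{(l)}=\mathbf{K}^{(l)}(\mathbf{K}^{(l)}+\lambda n\mathbf{I})^{-1}$ and $\varepsilon(l)=\sigma_{l,n}/(n\lambda+\sigma_{l,n})$. Let $\hat{\mathbf{f}}^{(0)}\in\mathbb{R}^n$ be the vector of values of the initial (level-$0$) estimator at $x_1,\dots,x_n$, and suppose the Laplacian-pyramid estimators satisfy, at the training points, $\hat{\mathbf{f}}^{(l+1)}=\hat{\mathbf{f}}^{(l)}+\mathbf{P}^{(l)}(\mathbf{f}-\hat{\mathbf{f}}^{(l)})$ for all $l\ge0$ (equivalently $\hat{\mathbf{f}}^{(l+1)}-\mathbf{f}=(\mathbf{I}-\mathbf{P}^{(l)})(\hat{\mathbf{f}}^{(l)}-\mathbf{f})$). Then for every integer $L>0$, $$\|\hat{\mathbf{f}}^{(L+1)}-\mathbf{f}\|\le\prod_{l=0}^{L}(1-\varepsilon(l))\,\|\hat{\mathbf{f}}^{(0)}-\mathbf{f}\|.$$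
   Context: $\|\cdot\|$ is the Euclidean norm on $\mathbb{R}^n$ (and the induced operator norm on matrices). The estimators are those of a Laplacian pyramid formulation of kernel ridge regression with noiseless labels $y_i=f(x_i)$: at each level, kernel ridge regression with kernel $\mathbf{K}^{(l)}$ and regularization $\lambda$ is fit to the current residual $\mathbf{f}-\hat{\mathbf{f}}^{(l)}$ and the fitted values $\mathbf{P}^{(l)}(\mathbf{f}-\hat{\mathbf{f}}^{(l)})$ are added to the estimator. *)

(* Defs.v *)
From HB Require Import structures.
From mathcomp Require Import all_boot all_order all_algebra.
From mathcomp Require Import all_classical all_reals all_analysis.
Set Implicit Arguments. Unset Strict Implicit. Unset Printing Implicit Defensive.
Import Order.TTheory GRing.Theory Num.Theory.
Local Open Scope ring_scope.

Definition vnorm (R : realType) (n : nat) (v : 'cV[R]_n) : R :=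
  Num.sqrt (\sum_(i < n) v i 0 ^+ 2).

Definition rnorm (R : realType) (D : nat) (v : 'rV[R]_D) : R :=
  Num.sqrt (\sum_(j < D) v 0 j ^+ 2).

Definition gauss_kernel (R : realType) (n D : nat) (x : 'I_n -> 'rV[R]_D) (r : R)
  : 'M[R]_n :=
  \matrix_(i, j) expR (- (rnorm (x i - x j) ^+ 2) / (2 * r ^+ 2)).

Definition smoother (R : realType) (n : nat) (K : 'M[R]_n) (lam : R) : 'M[R]_n :=
  K *m invmx (K + (lam * n%:R)%:M).

Definition smallest_eigenvalue (R : realType) (n : nat) (K : 'M[R]_n) (s : R) : Prop :=
  eigenvalue K s /\ (forall a, eigenvalue K a -> s <= a).

Definition eps_level (R : realType) (n : nat) (lam s : R) : R :=
  s / (n%:R * lam + s).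

(* Main.v *)
Require Import Defs.
From HB Require Import structures.
From mathcomp Require Import all_boot all_order all_algebra.
From mathcomp Require Import all_classical all_reals all_analysis.
From mathcomp Require Import complex.
Import Order.TTheory GRing.Theory Num.Theory.
Local Open Scope ring_scope.
Local Open Scope sesquilinear_scope.
Set Implicit Arguments. Unset Strict Implicit. Unset Printing Implicit Defensive.

Section Key.
Variable R : realType.
Local Notation C := (complex R).
Local Notation toC := (real_complex R).

Definition sqn n (v : 'cV[R]_n) := \sum_i v i 0 ^+ 2.
Definition nc n (v : 'cV[C]_n) := (v ^t* *m v) 0 0.

Lemma ncE n (v : 'cV[C]_n) : nc v = \sum_i Num.conj (v i 0) * v i 0.
Proof. by rewrite /nc mxE; apply: eq_bigr => i _; rewrite !mxE. Qed.

Lemma conjC_toC (a : R) : Num.conj (toC a) = toC a.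
Proof. by apply: conj_Creal; apply/complex_realP; exists a. Qed.

Lemma nc_toC n (w : 'cV[R]_n) : nc (map_mx toC w) = toC (sqn w).
Proof.
rewrite ncE /sqn rmorph_sum; apply: eq_bigr => i _.
by rewrite !mxE conjC_toC rmorphXn expr2.
Qed.

Lemma nc_mul_unitary n (P : 'M[C]_n) (z : 'cV[C]_n) :
  P \is unitarymx -> nc (P ^t* *m z) = nc z.
Proof.
move=> Pu; rewrite /nc trmx_mul map_mxM trmxCK.
by rewrite mulmxA -(mulmxA _ P) (unitarymxP Pu) mulmx1.
Qed.

Lemma nc_mul_unitary' n (P : 'M[C]_n) (z : 'cV[C]_n) :
  P \is unitarymx -> nc (P *m z) = nc z.
Proof.
move=> Pu; have PtP : P ^t* *m P = 1%:M.
  by rewrite -invmx_unitary // mulVmx // unitarymx_unit.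
rewrite /nc trmx_mul map_mxM.
by rewrite mulmxA -(mulmxA _ _ P) PtP mulmx1.
Qed.

Lemma key n (K : 'M[R]_n) (s c : R) :
  K^T = K -> (forall a, eigenvalue K a -> s <= a) -> 0 <= s + c ->
  forall w : 'cV[R]_n, (s + c) ^+ 2 * sqn w <= sqn ((K + c%:M) *m w).
Proof.
move=> Ksym Kev sc w.
pose Kc := map_mx toC K.
have Kh : Kc \is hermsymmx.
  apply/is_hermitianmxP; rewrite expr0 scale1r; apply/matrixP => i j.
  by rewrite !mxE conjC_toC -{1}Ksym mxE.
have /orthomx_spectralP Keq := hermitian_normalmx Kh.
set P := spectralmx Kc in Keq; set sp := spectral_diag Kc in Keq.
have Pu : P \is unitarymx := spectral_unitarymx Kc.
have Punit := unitarymx_unit Pu.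
have PtP : P ^t* *m P = 1%:M by rewrite -invmx_unitary // mulVmx.
have spr := hermitian_spectral_diag_real Kh.
have spev : forall i, exists a, sp 0 i = toC a /\ s <= a.
  move=> i; exists (complex.Re (sp 0 i)).
  have rl : sp 0 i \is Num.real by apply: (mxOverP spr).
  have e : toC (complex.Re (sp 0 i)) = sp 0 i by rewrite RRe_real.
  split; first by rewrite e.
  apply: Kev; rewrite -(eigenvalue_map toC) /= e.
  apply/eigenvalueP; exists (row i P).
    rewrite -row_mul -/Kc Keq mulmxA mulmxA mulmxV // mul1mx mul_diag_mx.
    by apply/rowP => j; rewrite !mxE.
  apply/eqP => /(congr1 (mulmx^~ (P ^t*))); rewrite -row_mul (unitarymxP Pu) mul0mx.
  by move=> /rowP /(_ i); rewrite !mxE eqxx /= => /eqP; rewrite oner_eq0.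
pose wc := map_mx toC w; pose y := P *m wc.
pose D' := diag_mx sp + (toC c)%:M.
have Meq : map_mx toC (K + c%:M) = P ^t* *m D' *m P.
  rewrite map_mxD map_scalar_mx -/Kc Keq invmx_unitary //.
  by rewrite /D' mulmxDr mulmxDl mul_mx_scalar -scalemxAl PtP -scalemx1.
have Dy : D' *m y = \col_i ((sp 0 i + toC c) * y i 0).
  rewrite /D' mulmxDl mul_diag_mx mul_scalar_mx; apply/matrixP => i j.
  by rewrite !mxE ord1 mulrDl.
rewrite -lecR -nc_toC map_mxM Meq -!mulmxA nc_mul_unitary // -/wc.
rewrite -/y Dy rmorphM /= -nc_toC -/wc -(nc_mul_unitary' wc Pu) -/y !ncE.
rewrite mulr_sumr; apply: ler_sum => i _.
rewrite (_ : (\col_i0 ((sp 0 i0 + toC c) * y i0 0)) i 0 = (sp 0 i + toC c) * y i 0);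
  last by rewrite mxE.
move: (y i 0) => z.
have [a [-> sa]] := spev i.
rewrite (_ : toC a + toC c = toC (a + c)); last by rewrite rmorphD.
rewrite [in X in _ <= X](rmorphM Num.conj) /= conjC_toC mulrACA -rmorphM /=.
apply: ler_wpM2r; first by rewrite mulrC mul_conjC_ge0.
rewrite lecR expr2; apply: ler_pM => //; by rewrite lerD2r.
Qed.

Lemma gauss_sym n D (x : 'I_n -> 'rV[R]_D) (r : R) :
  (gauss_kernel x r)^T = gauss_kernel x r.
Proof.
apply/matrixP => i j; rewrite !mxE.
have -> : x j - x i = - (x i - x j) by rewrite opprB.
suff -> : forall v : 'rV[R]_D, rnorm (- v) = rnorm v by [].
move=> v; rewrite /rnorm; congr Num.sqrt; apply: eq_bigr => k _.
by rewrite mxE sqrrN.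
Qed.

Lemma sqn_scale n (c : R) (u : 'cV[R]_n) : sqn (c *: u) = c ^+ 2 * sqn u.
Proof. by rewrite /sqn mulr_sumr; apply: eq_bigr => i _; rewrite mxE exprMn. Qed.

Lemma step n (K : 'M[R]_n) (s lam : R) (F fh : 'cV[R]_n) :
  K^T = K -> (forall a, eigenvalue K a -> s <= a) -> 0 < s -> 0 < lam ->
  vnorm (fh + smoother K lam *m (F - fh) - F) <=
    (1 - eps_level n lam s) * vnorm (fh - F).
Proof.
move=> Ksym Kev s0 lam0.
set c := lam * n%:R.
have c0 : 0 <= c by rewrite /c mulr_ge0 // ltW.
set M := K + c%:M.
have Mu : M \in unitmx.
  rewrite -row_free_unit -row_leq_rank; apply/negPn/negP => H.
  have : eigenvalue K (- c).
    rewrite /eigenvalue /eigenspace.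
    have -> : K - (- c)%:M = M by rewrite /M raddfN /= opprK.
    by rewrite -mxrank_eq0 mxrank_ker subn_eq0.
  move/Kev => sc; have : s <= 0 by apply: le_trans sc _; rewrite oppr_le0.
  by rewrite leNgt s0.
set e := fh - F; set u := invmx M *m e.
have eu : M *m u = e by rewrite /u mulmxA mulmxV // mul1mx.
have e' : fh + smoother K lam *m (F - fh) - F = c *: u.
  rewrite /smoother -/c -/M -mulmxA -/u.
  have -> : F - fh = - e by rewrite /e opprB.
  rewrite mulmxN -mul_scalar_mx.
  have -> : c%:M *m u = M *m u - K *m u by rewrite /M mulmxDl addrC addKr.
  by rewrite eu /e -/u mulmxN addrAC.
rewrite e'.
have hk := key Ksym Kev (ltW (ltr_wpDr c0 s0)) u.
rewrite -/M eu in hk.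
have sc0 : 0 < s + c by rewrite ltr_wpDr.
have h2 : (s + c) ^+ 2 * sqn (c *: u) <= c ^+ 2 * sqn e.
  rewrite sqn_scale mulrCA; apply: ler_wpM2l => //; exact: exprn_ge0.
have h3 : (s + c) * vnorm (c *: u) <= c * vnorm e.
  have -> : (s + c) * vnorm (c *: u) = Num.sqrt ((s + c) ^+ 2 * sqn (c *: u)).
    by rewrite sqrtrM ?exprn_ge0 ?ltW // sqrtr_sqr gtr0_norm.
  have -> : c * vnorm e = Num.sqrt (c ^+ 2 * sqn e).
    by rewrite sqrtrM ?exprn_ge0 // sqrtr_sqr ger0_norm.
  rewrite ler_sqrt //; apply: mulr_ge0; first exact: exprn_ge0.
  by apply: sumr_ge0 => i _; exact: sqr_ge0.
have -> : 1 - eps_level n lam s = c / (s + c).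
  have nz : c + s != 0 by rewrite addrC lt0r_neq0.
  rewrite /eps_level (mulrC _ lam) -/c -[1](divff nz) -mulrBl addrK.
  by rewrite addrC.
rewrite mulrAC ler_pdivlMr // mulrC; exact: h3.
Qed.

Lemma eps_ge0 n (s lam : R) : 0 < s -> 0 < lam -> 0 <= 1 - eps_level n lam s.
Proof.
move=> s0 lam0; rewrite /eps_level subr_ge0.
have h : 0 < n%:R * lam + s by rewrite ltr_wpDl // mulr_ge0 // ltW.
by rewrite ler_pdivrMr // mul1r lerDr mulr_ge0 // ltW.
Qed.

End Key.

Theorem theorem1 (R : realType) (n D : nat) (x : 'I_n -> 'rV[R]_D)
  (f : 'rV[R]_D -> R) (lam : R) (r : nat -> R) (sigma : nat -> R)
  (fhat : nat -> 'cV[R]_n) :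
  injective x ->
  0 < lam ->
  (forall l, 0 < r l) ->
  (forall l, smallest_eigenvalue (gauss_kernel x (r l)) (sigma l)) ->
  (forall l, 0 < sigma l) ->
  (forall l, fhat l.+1 = fhat l +
      smoother (gauss_kernel x (r l)) lam *m ((\col_i f (x i)) - fhat l)) ->
  forall L : nat, (0 < L)%N ->
    vnorm (fhat L.+1 - \col_i f (x i)) <=
      (\prod_(0 <= l < L.+1) (1 - eps_level n lam (sigma l)))
        * vnorm (fhat 0%N - \col_i f (x i)).
Proof.
move=> _ lam0 _ Hsig sig0 Hrec L _.
set F := \col_i f (x i).
have st : forall l, vnorm (fhat l.+1 - F) <=
    (1 - eps_level n lam (sigma l)) * vnorm (fhat l - F).
  move=> l; rewrite Hrec; have [_ Hmin] := Hsig l.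
  exact: step (gauss_sym x (r l)) Hmin (sig0 l) lam0.
elim: L.+1 => [|m IH]; first by rewrite big_geq // mul1r.
rewrite big_nat_recr //= mulrAC; apply: le_trans (st m) _.
rewrite mulrC; apply: ler_wpM2r => //; exact: eps_ge0.
Qed.
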